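(* For every integer $d\ge0$, the Legendre basis matrix $B^{(d)}$ is $(d+1)$-banded: $b^{(d)}_{k,\ell}=0$ whenever $|k-\ell|>d+1$.
   Context: Let $\{p_k\}_{k\ge0}$ be the orthonormal Legendre polynomials on $[-1,1]$: $p_k$ has exact degree $k$, positive leading coefficient, and $\int_{-1}^1 p_k(t)p_\ell(t)\,dt=\delta_{k\ell}$. Let $\Theta$ be the Heaviside function, $\Theta(x)=0$ for $x<0$ and $\Theta(x)=1$ for $x\ge0$. The Legendre basis matrix of degree $d$ is the infinite matrix $B^{(d)}=[b^{(d)}_{k,\ell}]_{k,\ell\ge0}$ with $b^{(d)}_{k,\ell}=\int_{-1}^1\int_{-1}^1 p_d(\tau)\Theta(\tau-\rho)p_k(\tau)p_\ell(\rho)\,d\rho\,d\tau$, i.e. the coefficient matrix of $p_d(t)\Theta(t-s)$. *)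

(* Defs.v *)
From HB Require Import structures.
From mathcomp Require Import all_boot all_order all_algebra.
From mathcomp Require Import all_classical all_reals all_analysis.
Set Implicit Arguments. Unset Strict Implicit. Unset Printing Implicit Defensive.
Import Order.TTheory GRing.Theory Num.Theory.
Local Open Scope classical_set_scope.
Local Open Scope ring_scope.

Definition heaviside {R : realType} (x : R) : R := if x < 0 then 0 else 1.

Definition int11 {R : realType} (f : R -> R) : R :=
  Rintegral (@lebesgue_measure R) `[(-1)%R, 1%R] f.

Definition orthonormal_legendre {R : realType} (p : nat -> {poly R}) : Prop :=
  (forall k, size (p k) = k.+1) /\
  (forall k, 0 < lead_coef (p k)) /\
  (forall k l, int11 (fun t => (p k).[t] * (p l).[t]) = (k == l)%:R).

Definition legendre_basis_entry {R : realType} (p : nat -> {poly R})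
  (d k l : nat) : R :=
  int11 (fun tau => int11 (fun rho =>
    (p d).[tau] * heaviside (tau - rho) * (p k).[tau] * (p l).[rho])).

(* Main.v *)
Require Import Defs.
From HB Require Import structures.
From mathcomp Require Import all_boot all_order all_algebra.
From mathcomp Require Import all_classical all_reals all_analysis.
From mathcomp Require Import ring.
From mathcomp Require Import zify.
Import Order.TTheory GRing.Theory Num.Theory.
Set Implicit Arguments. Unset Strict Implicit.
Local Open Scope ring_scope.
Local Open Scope classical_set_scope.

Section S.
Variable R : realType.
Implicit Types q F : {poly R}.

Lemma FTCpoly q F (a b : R) : a <= b -> deriv F = q ->
  Rintegral (@lebesgue_measure R) `[a, b] (fun x => q.[x]) = F.[b] - F.[a].
Proof.
move=> ab dF; have [->|ab'] := eqVneq a b.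
  by rewrite set_itv1 Rintegral_set1 subrr.
have ltab : a < b by rewrite lt_neqAle ab' ab.
have dLR : derivable_oo_LRcontinuous (horner F) a b.
  split.
  + by move=> x _; exact: derivable_horner.
  + by apply: cvg_at_right_filter; exact: continuous_horner.
  + by apply: cvg_at_left_filter; exact: continuous_horner.
have cq : derivable_oo_LRcontinuous (horner q) a b.
  split.
  + by move=> x _; exact: derivable_horner.
  + by apply: cvg_at_right_filter; exact: continuous_horner.
  + by apply: cvg_at_left_filter; exact: continuous_horner.
rewrite /Rintegral (@continuous_FTC2 _ (fun x => q.[x]) (horner F)) //=.
- exact: derivable_oo_LRcontinuous_within cq.
- by move=> x _; rewrite -derivE dF.
Qed.


Definition prim q : {poly R} :=
  \poly_(i < (size q).+1) (if i is j.+1 then q`_j / j.+1%:R else 0).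

Lemma derivPrim q : deriv (prim q) = q.
Proof.
apply/polyP => i; rewrite coef_deriv coef_poly ltnS.
case: ltnP => hi.
  have -> : forall x : R, x *+ i.+1 = x * i.+1%:R by move=> x; rewrite mulr_natr.
  by rewrite divfK // pnatr_eq0.
by rewrite mul0rn nth_default.
Qed.

Lemma size_prim q : (size (prim q) <= (size q).+1)%N.
Proof. exact: size_poly. Qed.

Definition Ip q := int11 (fun t => q.[t]).

Lemma IpE q F : deriv F = q -> Ip q = F.[1] - F.[-1].
Proof. by move=> dF; rewrite /Ip /int11 (@FTCpoly _ F) // lerN10. Qed.

Lemma IpD q r : Ip (q + r) = Ip q + Ip r.
Proof.
rewrite (@IpE _ (prim q + prim r)); last by rewrite derivD !derivPrim.
rewrite (@IpE _ _ (derivPrim q)) (@IpE _ _ (derivPrim r)) !hornerD; ring.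
Qed.

Lemma IpZ c q : Ip (c *: q) = c * Ip q.
Proof.
rewrite (@IpE _ (c *: prim q)); last by rewrite derivZ derivPrim.
rewrite (@IpE _ _ (derivPrim q)) !hornerZ; ring.
Qed.

Lemma Ip0 : Ip 0 = 0.
Proof. by rewrite -(scale0r 0) IpZ mul0r. Qed.

Lemma Ip_deriv F : Ip (deriv F) = F.[1] - F.[-1].
Proof. exact: IpE. Qed.


Lemma inner (a b tau : R) q : -1 <= tau <= 1 ->
  int11 (fun rho => a * heaviside (tau - rho) * b * q.[rho]) =
  a * b * (prim q - ((prim q).[-1])%:P).[tau].
Proof.
move=> /andP[t1 t2]; rewrite /int11.
have E : {in `[-1, 1], (fun rho => a * heaviside (tau - rho) * b * q.[rho]) =1
   ((fun rho => ((a * b) *: q).[rho]) \_ [set x | x <= tau])}.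
  move=> x _; rewrite /patch /heaviside subr_lt0.
  case: (ltP tau x) => h; case: ifPn; rewrite ?in_setE /= => h'.
  - by move: h; rewrite ltNge h'.
  - by rewrite mulr0 !mul0r.
  - by rewrite mulr1 hornerZ.
  - by exfalso; move/negP: h'; apply; rewrite mem_setE.
transitivity (Rintegral (@lebesgue_measure R) `[-1, 1]
   ((fun rho => ((a * b) *: q).[rho]) \_ [set x | x <= tau])).
  exact: eq_Rintegral.
rewrite -Rintegral_mkcondr.
have -> : `[-1, 1] `&` [set x | x <= tau] = `[-1, tau].
  apply/seteqP; split => x /=; rewrite !in_itv /=.
  - by move=> [/andP[-> _] ->].
  - move=> /andP[-> h]; split => //; apply/andP; split => //.
    exact: le_trans h t2.
rewrite (@FTCpoly _ ((a * b) *: prim q)) //; last by rewrite derivZ derivPrim.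
by rewrite !hornerE; ring.
Qed.


Section Leg.
Variable p : nat -> {poly R}.
Hypothesis Hp : orthonormal_legendre p.

Lemma orthIp k j : Ip (p k * p j) = (k == j)%:R.
Proof.
case: Hp => _ [_ H]; rewrite -H /Ip; congr int11.
by apply/funext => t; rewrite hornerM.
Qed.

Lemma LemA k : forall n q, (size q <= n)%N -> (n <= k)%N -> Ip (p k * q) = 0.
Proof.
elim=> [|n IH] q hq hn.
  by move: hq; rewrite leqn0 size_poly_eq0 => /eqP ->; rewrite mulr0 Ip0.
case: Hp => Hs [Hl _].
have lnz : lead_coef (p n) != 0 by rewrite gt_eqF.
set c := q`_n / lead_coef (p n).
set r := q - c *: p n.
have hr : (size r <= n)%N.
  apply/leq_sizeP => j hj; rewrite coefB coefZ.
  move: hj; rewrite leq_eqVlt => /orP[/eqP <-|hj].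
    rewrite /c lead_coefE Hs /= divfK ?subrr //.
    by move: lnz; rewrite lead_coefE Hs.
  rewrite !nth_default ?mulr0 ?subrr //; first by rewrite Hs.
  exact: leq_trans hq hj.
have -> : q = r + c *: p n by rewrite /r subrK.
rewrite mulrDr IpD -scalerAr IpZ orthIp IH //; last exact: ltnW.
have : k != n by rewrite neq_ltn hn orbT.
by move/negbTE => ->; rewrite mulr0 addr0.
Qed.

End Leg.
End S.

Theorem corollary3p4 (R : realType) (p : nat -> {poly R}) :
  orthonormal_legendre p ->
  forall d k l : nat, (d.+1 < `|(k%:Z - l%:Z)%R|)%N ->
    legendre_basis_entry p d k l = 0.
Proof.
move=> Hp d k l hkl.
have Hs : forall k, size (p k) = k.+1 by case: Hp.
set A := prim (p l) - ((prim (p l)).[-1])%:P.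
have E : legendre_basis_entry p d k l = Ip (p d * p k * A).
  rewrite /legendre_basis_entry /Ip [in LHS]/int11 [in RHS]/int11.
  apply: eq_Rintegral => t; rewrite inE /= in_itv /= => ht.
  by rewrite !hornerM; exact: (inner _ _ _ ht).
have sA : (size A <= l.+2)%N.
  rewrite /A (leq_trans (size_polyD _ _)) // size_polyN geq_max size_polyC.
  rewrite (leq_trans (size_prim _)) ?Hs //.
  by case: (_ != 0).
have dA : deriv A = p l by rewrite derivB derivC subr0 derivPrim.
have [h|h] : (k + d + 1 < l)%N \/ (l + d + 1 < k)%N by lia.
- set Q := prim (p d * p k) - ((prim (p d * p k)).[1])%:P.
  have dQ : deriv Q = p d * p k by rewrite derivB derivC subr0 derivPrim.
  have sQ : (size Q <= l)%N.
    rewrite /Q (leq_trans (size_polyD _ _)) // size_polyN geq_max size_polyC.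
    apply/andP; split; last by apply: leq_trans (leq_b1 _) _; lia.
    apply: (leq_trans (size_prim _)).
    have := size_mul_leq (p d) (p k); rewrite !Hs; move: (size _) => s; rewrite addSn /= => hs; clear -h hs. lia.
  have H0 : Ip (deriv (Q * A)) = 0.
    rewrite Ip_deriv !hornerM /Q /A !(hornerD, hornerN, hornerC) !subrr.
    by rewrite mul0r mulr0 subrr.
  move: H0; rewrite derivM dQ dA IpD (mulrC Q) (LemA Hp (n := size Q)) //.
  by rewrite addr0 E.
- rewrite E -mulrA mulrCA (LemA Hp (n := k)) //.
  rewrite (leq_trans (size_mul_leq _ _)) // Hs; lia.
Qed.
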